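(* Let $X=(X,\preceq,\delta)$ be a labeled poset, $Y\subset X$ and $\overline X\in\operatorname{Tot}(X)$, and put $W=P_Y(\overline X)$. Then the relation $\sim_T$ on $P_Y^{-1}(W)$, defined by $\overline X'\sim_T\overline X''$ if and only if $\overline X'=T_{Y_1,Y_2}(\overline X'')$ for some $Y_1,Y_2\in\operatorname{Tot}(Y)$, is an equivalence relation.
   Context: A labeled poset is $(X,\preceq,\delta)$ with $X$ finite, $\preceq$ a partial order and $\delta$ a labeling map; $Y\subset X$ carries the restricted order and labeling. $\operatorname{Tot}(X)$ is the set of $(X,\preceq',\delta)$ with $\preceq'\supseteq\preceq$ a total order. $P_Y:\operatorname{Tot}(X)\to\operatorname{Tot}(X\setminus Y)$ sends a total order on $X$ to its restriction to $X\setminus Y$, and $P_Y^{-1}(W)$ is the set of $\overline X\in\operatorname{Tot}(X)$ whose restriction to $X\setminus Y$ is $W$. For $Y_1,Y_2\in\operatorname{Tot}(Y)$ with orders $\preceq_{Y_1},\preceq_{Y_2}$ and a total order $\overline X=(X,\preceq_{\overline X},\delta)$, $T_{Y_1,Y_2}(\overline X)=(X,(\preceq_{\overline X}\setminus\preceq_{Y_1})\cup\preceq_{Y_2},\delta)$. *)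

(* Defs.v *)
From mathcomp Require Import all_boot.
Set Implicit Arguments. Unset Strict Implicit. Unset Printing Implicit Defensive.

(* A (binary) relation on a finite type T is a set of pairs; (x,y) \in r
   means x ⪯ y.  A relation "on A" (A : {set T}) is a subset of A × A. *)
Section Defs.
Variable T : finType.
Implicit Types (A Y : {set T}) (r : {set T * T}).

Definition rel_on A r : Prop :=
  forall p, p \in r -> (p.1 \in A) && (p.2 \in A).

Definition partial_order_on A r : Prop :=
  [/\ rel_on A r,
      (forall x, x \in A -> (x, x) \in r),
      (forall x y, (x, y) \in r -> (y, x) \in r -> x = y) &
      (forall x y z, (x, y) \in r -> (y, z) \in r -> (x, z) \in r)].

Definition total_order_on A r : Prop :=
  partial_order_on A r /\
  (forall x y, x \in A -> y \in A -> ((x, y) \in r) || ((y, x) \in r)).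

Definition restr A r : {set T * T} :=
  [set p in r | (p.1 \in A) && (p.2 \in A)].

Definition Tot A (le : {set T * T}) (r : {set T * T}) : Prop :=
  total_order_on A r /\ le \subset r.

Definition PYinv (le : {set T * T}) Y (W : {set T * T}) (r : {set T * T}) : Prop :=
  Tot setT le r /\ restr (~: Y) r = W.

Definition Top (Y1 Y2 Xb : {set T * T}) : {set T * T} := (Xb :\: Y1) :|: Y2.

Definition simT (le : {set T * T}) Y (X1 X2 : {set T * T}) : Prop :=
  exists Y1 Y2 : {set T * T}, [/\ Tot Y (restr Y le) Y1, Tot Y (restr Y le) Y2 & X1 = Top Y1 Y2 X2].

Definition equivalence_on (U : Type) (P : U -> Prop) (R : U -> U -> Prop) : Prop :=
  [/\ (forall x, P x -> R x x),
      (forall x y, P x -> P y -> R x y -> R y x) &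
      (forall x y z, P x -> P y -> P z -> R x y -> R y z -> R x z)].
End Defs.

(* Main.v *)
Require Import Defs.
From mathcomp Require Import all_boot.

Section S.
Variable T : finType.
Implicit Types (Y : {set T}) (le : {set T * T}).

Definition agree Y (X1 X2 : {set T * T}) := forall p : T * T,
  ~~ ((p.1 \in Y) && (p.2 \in Y)) -> (p \in X1) = (p \in X2).

Lemma restr_tot le Y (X : {set T * T}) : Tot setT le X -> Tot Y (restr Y le) (restr Y X).
Proof.
move=> [[[_ refl anti trans] tot] sub].
split; last first.
  apply/subsetP=> p; rewrite !inE => /andP[pl ->]; rewrite (subsetP sub _ pl).
  by [].
split; last first.
  move=> x y xY yY; rewrite !inE /= xY yY /= !andbT.
  by apply: tot; rewrite inE.
split.
- by move=> p; rewrite inE => /andP[_ ->].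
- by move=> x xY; rewrite inE /= xY refl // inE.
- by move=> x y; rewrite !inE => /andP[h _] /andP[h' _]; apply: anti.
- move=> x y z; rewrite !inE /= => /andP[h /andP[-> _]] /andP[h' /andP[_ ->]].
  by rewrite (trans _ _ _ h h').
Qed.

Lemma agree_sim le Y (X1 X2 : {set T * T}) : Tot setT le X1 -> Tot setT le X2 ->
  agree Y X1 X2 -> simT le Y X1 X2.
Proof.
move=> t1 t2 ag; exists (restr Y X2), (restr Y X1); split;
  try exact: restr_tot.
apply/setP=> p; rewrite /Top !inE.
case: (boolP ((p.1 \in Y) && (p.2 \in Y))) => h.
  by rewrite !andbT; case: (p \in X1); case: (p \in X2).
by rewrite (ag p h) ?andbF ?orbF ?andbT; case: (p \in X2).
Qed.

Lemma sim_agree le Y (X1 X2 : {set T * T}) : simT le Y X1 X2 -> agree Y X1 X2.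
Proof.
move=> [Y1 [Y2 [[[[r1 _ _ _] _] _] [[[r2 _ _ _] _] _] ->]]] p h.
rewrite /Top !inE.
have n1 : (p \in Y1) = false by apply/negbTE/negP => /r1; apply/negP.
have n2 : (p \in Y2) = false by apply/negbTE/negP => /r2; apply/negP.
by rewrite n1 n2 orbF.
Qed.
End S.

Theorem mainTheorem4 (T : finType) (le : {set T * T}) (Y : {set T})
    (Xb : {set T * T}) :
  partial_order_on setT le ->
  Tot setT le Xb ->
  let W := restr (~: Y) Xb in
  equivalence_on (PYinv le Y W) (simT le Y).
Proof.
move=> _ _ W; split.
- by move=> x [tx _]; apply: agree_sim.
- move=> x y [tx _] [ty _] /sim_agree ag; apply: agree_sim => // p h.
  by rewrite ag.
- move=> x y z [tx _] _ [tz _] /sim_agree a1 /sim_agree a2.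
  by apply: agree_sim => // p h; rewrite a1 // a2.
Qed.
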